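(* Let $G$ be a topological group which is either completely metrizable or locally compact Hausdorff, let $H$ be an $\aleph_1$-free group, and let $\phi:G\to H$ be an abstract group homomorphism. Then for every finitely generated subgroup $F\le H$ there exists an open neighborhood $U\subseteq G$ of $1_G$ such that $\phi(U)\cap F=\{1_H\}$.
   Context: A group is $\aleph_1$-free if every countable subgroup is free. *)

(* Defs.v *)
From Stdlib Require Import Reals List.
Import ListNotations.
Open Scope R_scope.

Record group := mkGroup {
  gcar :> Type;
  gmul : gcar -> gcar -> gcar;
  ginv : gcar -> gcar;
  gone : gcar;
  gmul_assoc : forall x y z, gmul x (gmul y z) = gmul (gmul x y) z;
  gmul_1l : forall x, gmul gone x = x;
  gmul_Vl : forall x, gmul (ginv x) x = gone
}.

Definition is_hom (G H : group) (f : G -> H) : Prop :=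
  forall x y, f (gmul G x y) = gmul H (f x) (f y).

Definition is_subgroup (H : group) (S : H -> Prop) : Prop :=
  S (gone H) /\ (forall x y, S x -> S y -> S (gmul H x y)) /\
  (forall x, S x -> S (ginv H x)).

Fixpoint word_eval (H : group) (w : list (bool * H)) : H :=
  match w with
  | [] => gone H
  | (b, x) :: w' => gmul H (if b then x else ginv H x) (word_eval H w')
  end.

Definition word_over (H : group) (X : H -> Prop) (w : list (bool * H)) : Prop :=
  forall l, In l w -> X (snd l).

Fixpoint reduced (H : group) (w : list (bool * H)) : Prop :=
  match w with
  | (b1, x1) :: (((b2, x2) :: _) as w') =>
      ~ (x1 = x2 /\ b1 <> b2) /\ reduced H w'
  | _ => True
  end.

Definition generates (H : group) (X S : H -> Prop) : Prop :=
  forall x, S x <-> exists w, word_over H X w /\ word_eval H w = x.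

Definition free_basis (H : group) (X S : H -> Prop) : Prop :=
  generates H X S /\
  forall w, word_over H X w -> reduced H w -> w <> [] -> word_eval H w <> gone H.

Definition free_subgroup (H : group) (S : H -> Prop) : Prop :=
  exists X, free_basis H X S.

Definition countable_set {T : Type} (S : T -> Prop) : Prop :=
  (forall x, ~ S x) \/ exists f : nat -> T, (forall n, S (f n)) /\ forall x, S x -> exists n, f n = x.

Definition aleph1_free (H : group) : Prop :=
  forall S, is_subgroup H S -> countable_set S -> free_subgroup H S.

Definition fin_gen_subgroup (H : group) (F : H -> Prop) : Prop :=
  exists l : list H, generates H (fun x => In x l) F.

Record topology (T : Type) := mkTop {
  is_open : (T -> Prop) -> Prop;
  open_full : is_open (fun _ => True);
  open_inter : forall U V, is_open U -> is_open V -> is_open (fun x => U x /\ V x);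
  open_union : forall (Fam : (T -> Prop) -> Prop),
      (forall U, Fam U -> is_open U) -> is_open (fun x => exists U, Fam U /\ U x)
}.
Arguments is_open {T} t U.

Definition topological_group (G : group) (t : topology G) : Prop :=
  (forall W x y, is_open t W -> W (gmul G x y) ->
     exists U V, is_open t U /\ is_open t V /\ U x /\ V y /\
       forall u v, U u -> V v -> W (gmul G u v)) /\
  (forall W, is_open t W -> is_open t (fun x => W (ginv G x))).

Definition hausdorff {T} (t : topology T) : Prop :=
  forall x y, x <> y -> exists U V, is_open t U /\ is_open t V /\ U x /\ V y /\
    forall z, ~ (U z /\ V z).

Definition compact {T} (t : topology T) (K : T -> Prop) : Prop :=
  forall Fam : (T -> Prop) -> Prop,
    (forall U, Fam U -> is_open t U) ->
    (forall x, K x -> exists U, Fam U /\ U x) ->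
    exists l : list (T -> Prop), (forall U, In U l -> Fam U) /\
      forall x, K x -> exists U, In U l /\ U x.

Definition locally_compact {T} (t : topology T) : Prop :=
  forall x, exists U K, is_open t U /\ U x /\ compact t K /\ forall y, U y -> K y.

Definition is_metric {T} (d : T -> T -> R) : Prop :=
  (forall x y, 0 <= d x y) /\ (forall x y, d x y = 0 <-> x = y) /\
  (forall x y, d x y = d y x) /\ (forall x y z, d x z <= d x y + d y z).

Definition metric_induces {T} (d : T -> T -> R) (t : topology T) : Prop :=
  forall U, is_open t U <->
    forall x, U x -> exists eps, 0 < eps /\ forall y, d x y < eps -> U y.

Definition metric_complete {T} (d : T -> T -> R) : Prop :=
  forall u : nat -> T,
    (forall eps, 0 < eps -> exists N, forall m n, (N <= m)%nat -> (N <= n)%nat -> d (u m) (u n) < eps) ->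
    exists l, forall eps, 0 < eps -> exists N, forall n, (N <= n)%nat -> d (u n) l < eps.

Definition completely_metrizable {T} (t : topology T) : Prop :=
  exists d, is_metric d /\ metric_induces d t /\ metric_complete d.

(* Main.v *)
Require Import Defs.
From Stdlib Require Import Reals List.
From Stdlib Require Import Lra Lia Arith Classical ClassicalEpsilon FunctionalExtensionality PropExtensionality Arith.Cantor.
Import ListNotations.

Module P1.
Import ListNotations.

Section GroupBasics.
Variable G : group.
Notation "x ** y" := (gmul G x y) (at level 40, left associativity).
Notation "x ^-" := (ginv G x) (at level 30).
Notation e := (gone G).

Lemma g_idem1 (y : G) : y ** y = y -> y = e.
Proof. intro H. transitivity (gmul G (ginv G y) (gmul G y y)).
  rewrite gmul_assoc, gmul_Vl, gmul_1l. reflexivity.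
  rewrite H. apply gmul_Vl. Qed.

Lemma gmul_Vr (x : G) : x ** x^- = e.
Proof. apply g_idem1. rewrite <- gmul_assoc. rewrite (gmul_assoc G (x^-) x).
  rewrite gmul_Vl, gmul_1l. reflexivity. Qed.

Lemma gmul_1r (x : G) : x ** e = x.
Proof. rewrite <- (gmul_Vl G x), gmul_assoc, gmul_Vr, gmul_1l. reflexivity. Qed.

Lemma gcancel_l (a x y : G) : a ** x = a ** y -> x = y.
Proof. intro H. rewrite <- (gmul_1l G x), <- (gmul_1l G y), <- (gmul_Vl G a),
  <- !gmul_assoc, H. reflexivity. Qed.

Lemma gcancel_r (a x y : G) : x ** a = y ** a -> x = y.
Proof. intro H. rewrite <- (gmul_1r x), <- (gmul_1r y), <- (gmul_Vr a),
  !gmul_assoc, H. reflexivity. Qed.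

Lemma ginv_mul (x y : G) : (x ** y)^- = y^- ** x^-.
Proof. apply (gcancel_l (x ** y)). rewrite gmul_Vr. rewrite <- gmul_assoc.
  rewrite (gmul_assoc G y), gmul_Vr, gmul_1l, gmul_Vr. reflexivity. Qed.

Lemma ginv_inv (x : G) : (x^-)^- = x.
Proof. apply (gcancel_l (x^-)). rewrite gmul_Vr, gmul_Vl. reflexivity. Qed.

Lemma ginv_1 : e^- = e.
Proof. rewrite <- (gmul_1l G (e^-)). apply gmul_Vr. Qed.

Lemma ginv_uniq (x y : G) : x ** y = e -> y = x^-.
Proof. intro H. apply (gcancel_l x). rewrite gmul_Vr. exact H. Qed.

Fixpoint gpow (x : G) (n : nat) : G :=
  match n with 0 => e | S k => x ** gpow x k end.

Lemma gpow_add (x : G) m n : gpow x (m + n) = gpow x m ** gpow x n.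
Proof. induction m; simpl. now rewrite gmul_1l. now rewrite IHm, gmul_assoc. Qed.

Lemma gpow_Sr (x : G) n : gpow x (S n) = gpow x n ** x.
Proof. replace (S n) with (n + 1)%nat by lia. rewrite gpow_add. simpl. now rewrite gmul_1r. Qed.

Lemma gpow_conj (u x : G) n : gpow (u ** x ** u^-) n = u ** gpow x n ** u^-.
Proof. induction n; simpl. now rewrite gmul_1r, gmul_Vr.
  rewrite IHn. rewrite !gmul_assoc. f_equal. rewrite <- !gmul_assoc.
  rewrite (gmul_assoc G (u^-) u), gmul_Vl, gmul_1l. reflexivity. Qed.
End GroupBasics.

Lemma hom_1 (G H : group) (f : G -> H) : is_hom G H f -> f (gone G) = gone H.
Proof. intro Hf. apply g_idem1. rewrite <- Hf, gmul_1l. reflexivity. Qed.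

Lemma hom_pow (G H : group) (f : G -> H) x n : is_hom G H f -> f (gpow G x n) = gpow H (f x) n.
Proof. intro Hf. induction n; simpl. apply hom_1; auto. rewrite Hf, IHn. reflexivity. Qed.

End P1.
Import P1.

Module P2.
Import ListNotations.
Local Open Scope nat_scope.

Section Words.
Variable H : group.
Notation "x ** y" := (gmul H x y) (at level 40, left associativity).
Notation "x ^-" := (ginv H x) (at level 30).
Notation e := (gone H).
Notation word := (list (bool * H)).

Definition lv (a : bool * H) : H := if fst a then snd a else (snd a)^-.
Definition linv (a : bool * H) : bool * H := (negb (fst a), snd a).
Definition winv (w : word) : word := rev (map linv w).
Definition cancel (a b : bool * H) : Prop := snd a = snd b /\ fst a <> fst b.
Definition J (x y : word) : Prop :=
  match x, y with _ :: _, b :: _ => ~ cancel (last x b) b | _, _ => True end.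
Local Notation ev := (word_eval H).

Lemma ev_cons a w : ev (a :: w) = lv a ** ev w.
Proof. destruct a; reflexivity. Qed.

Lemma ev_app x y : ev (x ++ y) = ev x ** ev y.
Proof. induction x; simpl app. rewrite gmul_1l; reflexivity.
  rewrite !ev_cons, IHx, gmul_assoc. reflexivity. Qed.

Lemma lv_linv a : lv (linv a) = (lv a)^-.
Proof. destruct a as [[] x]; unfold lv, linv; simpl. reflexivity. now rewrite ginv_inv. Qed.

Lemma winv_cons a w : winv (a :: w) = winv w ++ [linv a].
Proof. reflexivity. Qed.

Lemma winv_app x y : winv (x ++ y) = winv y ++ winv x.
Proof. unfold winv. now rewrite map_app, rev_app_distr. Qed.

Lemma ev_winv w : ev (winv w) = (ev w)^-.
Proof. induction w. simpl. now rewrite ginv_1.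
  rewrite winv_cons, ev_app, IHw, !ev_cons. change (ev []) with e. rewrite gmul_1r, lv_linv, ginv_mul. reflexivity. Qed.

Lemma length_winv w : length (winv w) = length w.
Proof. unfold winv. now rewrite length_rev, length_map. Qed.

Lemma red_cons2 a b w : reduced H (a :: b :: w) <-> ~ cancel a b /\ reduced H (b :: w).
Proof. destruct a, b. unfold cancel. simpl. split; intros [h1 h2]; split; auto. Qed.

Lemma last_cons2 (a c : bool * H) x d : last (a :: c :: x) d = last (c :: x) d.
Proof. reflexivity. Qed.

Lemma red_app x y : reduced H (x ++ y) <-> reduced H x /\ reduced H y /\ J x y.
Proof.
  induction x as [|a x IH].
  - simpl. split. intros h; repeat split; auto. tauto.
  - destruct x as [|c x].
    + simpl app. destruct y as [|b y].
      * simpl. tauto.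
      * rewrite red_cons2. simpl J. simpl. tauto.
    + simpl app. rewrite red_cons2. change (c :: x ++ y) with ((c :: x) ++ y).
      rewrite IH. rewrite red_cons2.
      assert (J (a :: c :: x) y <-> J (c :: x) y).
      { destruct y. simpl; tauto. unfold J. rewrite last_cons2. tauto. }
      tauto.
Qed.

Lemma last_app {A} (x y : list A) d : y <> [] -> last (x ++ y) d = last y d.
Proof. intros h. rewrite (app_removelast_last d h) at 1. rewrite app_assoc, last_last. reflexivity. Qed.

Lemma J_app_l x y z : y <> [] -> (J (x ++ y) z <-> J y z).
Proof. intros hy. destruct z as [|b z]. destruct (x ++ y), y; simpl; tauto.
  destruct y as [|c y]. congruence.
  assert (hne : x ++ c :: y <> []). { destruct x; discriminate. }
  unfold J. destruct (x ++ c :: y) eqn:E. congruence.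
  rewrite <- E. rewrite last_app by discriminate. tauto. Qed.

Lemma J_app_r x y z : y <> [] -> (J x (y ++ z) <-> J x y).
Proof. intros hy. destruct y as [|c y]. congruence. destruct x; simpl; tauto. Qed.

Lemma cancel_sym a b : cancel a b -> cancel b a.
Proof. unfold cancel; intros [h1 h2]; split; auto. Qed.

Lemma red_winv w : reduced H w -> reduced H (winv w).
Proof.
  induction w as [|a w IH]; intros h. simpl; auto.
  rewrite winv_cons. apply red_app. split; [|split].
  - apply IH. destruct w; simpl; auto. apply red_cons2 in h; tauto.
  - simpl; auto.
  - destruct w as [|b w]. simpl. auto.
    apply red_cons2 in h. destruct h as [h _].
    rewrite winv_cons. unfold J. destruct (winv w ++ [linv b]) eqn:E.
    destruct (winv w); discriminate.
    rewrite <- E, last_last. unfold cancel, linv in *; simpl.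
    intros [h1 h2]. apply h. split; auto. intro h3. apply h2. now rewrite h3.
Qed.

Lemma over_app B x y : word_over H B (x ++ y) <-> word_over H B x /\ word_over H B y.
Proof. unfold word_over. split. intros h; split; intros l hl; apply h; apply in_or_app; auto.
  intros [h1 h2] l hl. apply in_app_or in hl. destruct hl; auto. Qed.

Lemma over_winv B w : word_over H B w -> word_over H B (winv w).
Proof. unfold word_over, winv. intros h l hl. apply in_rev in hl. apply in_map_iff in hl.
  destruct hl as [a [<- ha]]. apply h in ha. exact ha. Qed.

Lemma over_cons B a w : word_over H B (a :: w) <-> B (snd a) /\ word_over H B w.
Proof. unfold word_over. simpl. split. intros h; split; auto.
  intros [h1 h2] l [<-|hl]; auto. Qed.

Lemma notred_decomp w : ~ reduced H w ->
  exists l1 a b l2, w = l1 ++ a :: b :: l2 /\ cancel a b.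
Proof.
  induction w as [|a w IH]; intro h. simpl in h; tauto.
  destruct w as [|b w]. destruct a; simpl in h; tauto.
  rewrite red_cons2 in h. destruct (classic (cancel a b)) as [hc|hc].
  - exists [], a, b, w. auto.
  - assert (h' : ~ reduced H (b :: w)) by tauto.
    destruct (IH h') as [l1 [a' [b' [l2 [E hc']]]]].
    exists (a :: l1), a', b', l2. rewrite E. auto.
Qed.

Lemma ev_cancel a b w : cancel a b -> ev (a :: b :: w) = ev w.
Proof. destruct a as [ba xa], b as [bb xb]. unfold cancel; simpl. intros [-> hb].
  destruct ba, bb; try congruence; rewrite gmul_assoc.
  rewrite gmul_Vr, gmul_1l; auto. rewrite gmul_Vl, gmul_1l; auto. Qed.

Section Basis.
Variable B : H -> Prop.
Hypothesis Hfree : forall w, word_over H B w -> reduced H w -> w <> [] -> ev w <> e.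

Lemma red_uniq : forall n w1 w2, length w1 <= n ->
  word_over H B w1 -> word_over H B w2 -> reduced H w1 -> reduced H w2 ->
  ev w1 = ev w2 -> w1 = w2.
Proof.
  induction n as [|n IH]; intros w1 w2 hl o1 o2 r1 r2 he.
  - destruct w1; [|simpl in hl; lia]. destruct (classic (w2 = [])) as [h|h]; auto.
    exfalso. apply (Hfree w2 o2 r2 h). rewrite <- he. reflexivity.
  - destruct w1 as [|x1 w1'].
    + destruct (classic (w2 = [])) as [h|h]; auto.
      exfalso. apply (Hfree w2 o2 r2 h). rewrite <- he. reflexivity.
    + destruct (exists_last (l := x1 :: w1') ltac:(discriminate)) as [p1 [a E1]].
      rewrite E1 in *. destruct w2 as [|x2 w2'].
      * exfalso. apply (Hfree _ o1 r1). destruct p1; discriminate. rewrite he. reflexivity.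
      * destruct (exists_last (l := x2 :: w2') ltac:(discriminate)) as [p2 [b E2]].
        rewrite E2 in *. clear E1 E2 x1 w1' x2 w2'.
        apply red_app in r1. apply red_app in r2.
        apply over_app in o1. apply over_app in o2.
        destruct (classic (a = b)) as [hab|hab].
        -- subst b. f_equal. apply IH; try tauto.
           rewrite length_app in hl; simpl in hl; lia.
           rewrite !ev_app in he. apply gcancel_r in he. exact he.
        -- exfalso. apply (Hfree ((p1 ++ [a]) ++ winv (p2 ++ [b]))).
           ++ apply over_app. split. apply over_app; tauto. apply over_winv, over_app; tauto.
           ++ apply red_app. split; [apply red_app; tauto|split].
              apply red_winv, red_app; tauto.
              rewrite winv_app. change (winv [b]) with [linv b]. simpl app.
              unfold J.
              destruct (p1 ++ [a]) eqn:E. destruct p1; discriminate.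
              rewrite <- E, last_last. unfold cancel, linv; simpl.
              intros [h1 h2]. apply hab. destruct a, b; simpl in *. subst.
              destruct b, b0; simpl in h2; congruence.
           ++ destruct p1; discriminate.
           ++ rewrite ev_app, ev_winv, he. apply gmul_Vr.
Qed.

Definition isN (y : H) (n : nat) : Prop :=
  (exists w, word_over H B w /\ ev w = y /\ length w = n) /\
  (forall w, word_over H B w -> ev w = y -> n <= length w).

Lemma exN y : (exists w, word_over H B w /\ ev w = y) -> exists n, isN y n.
Proof.
  intros [w [o E]].
  assert (forall k, forall w, length w <= k -> word_over H B w -> ev w = y -> exists n, isN y n).
  { induction k as [|k IH]; intros w' hl o' E'.
    - exists (length w'). split. eauto. intros; lia.
    - destruct (classic (exists w'', word_over H B w'' /\ ev w'' = y /\ length w'' < length w'))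
        as [[w'' [o'' [E'' hl'']]]|hn].
      + apply (IH w''); auto. lia.
      + exists (length w'). split. eauto. intros w'' o'' E''.
        destruct (Nat.le_gt_cases (length w') (length w'')); auto. exfalso; eauto. }
  eauto.
Qed.

Lemma min_reduced w : word_over H B w ->
  (forall w', word_over H B w' -> ev w' = ev w -> length w <= length w') -> reduced H w.
Proof.
  intros o hm. apply NNPP. intro hr. destruct (notred_decomp w hr) as [l1 [a [b [l2 [E hc]]]]].
  specialize (hm (l1 ++ l2)). subst w. rewrite !length_app in hm. simpl in hm.
  assert (length l1 + S (S (length l2)) <= length l1 + length l2); [|lia].
  apply hm. apply over_app in o. destruct o as [o1 o2]. apply over_app. split; auto.
  intros l hl. apply o2. simpl; auto.
  rewrite !ev_app, ev_cancel; auto.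
Qed.

Lemma isN_attained y n : isN y n -> exists w, word_over H B w /\ reduced H w /\ ev w = y /\ length w = n.
Proof. intros [[w [o [E L]]] hm]. exists w. repeat split; auto. apply min_reduced; auto.
  intros w' o' E'. rewrite L. apply hm; [exact o'|congruence]. Qed.

Lemma reduced_isN w : word_over H B w -> reduced H w -> isN (ev w) (length w).
Proof.
  intros o r. destruct (exN (ev w)) as [n hn]. eauto.
  destruct (isN_attained _ _ hn) as [w0 [o0 [r0 [E0 L0]]]].
  assert (w0 = w) by (apply (red_uniq (length w0)); auto). subst w0. rewrite L0. exact hn.
Qed.

Lemma isN_fun y n1 n2 : isN y n1 -> isN y n2 -> n1 = n2.
Proof. intros [[w1 [o1 [E1 L1]]] h1] [[w2 [o2 [E2 L2]]] h2].
  specialize (h1 w2 o2 E2). specialize (h2 w1 o1 E1). lia. Qed.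

Lemma isN_mul a b na nb nab : isN a na -> isN b nb -> isN (a ** b) nab -> nab <= na + nb.
Proof. intros [[w1 [o1 [E1 L1]]] _] [[w2 [o2 [E2 L2]]] _] [_ h].
  specialize (h (w1 ++ w2)). rewrite length_app in h. subst. apply h.
  apply over_app; auto. apply ev_app. Qed.

Lemma isN_inv a na nb : isN a na -> isN (a^-) nb -> nb <= na.
Proof. intros [[w1 [o1 [E1 L1]]] _] [_ h]. specialize (h (winv w1)). rewrite length_winv in h.
  subst. apply h. apply over_winv; auto. apply ev_winv. Qed.

Lemma isN_one : isN e 0.
Proof. split. exists []. repeat split. intros l []. intros; lia. Qed.

Fixpoint cpow (c : word) (m : nat) : word :=
  match m with 0 => [] | S k => c ++ cpow c k end.

Lemma ev_cpow c m : ev (cpow c m) = gpow H (ev c) m.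
Proof. induction m; simpl; auto. rewrite ev_app, IHm. auto. Qed.

Lemma length_cpow c m : length (cpow c m) = m * length c.
Proof. induction m; simpl; auto. rewrite length_app, IHm. lia. Qed.

Lemma over_cpow c m : word_over H B c -> word_over H B (cpow c m).
Proof. intros o. induction m; simpl. intros l []. apply over_app; auto. Qed.

Lemma cpow_ne c m : c <> [] -> cpow c (S m) <> [].
Proof. intros h. simpl. destruct c; simpl; congruence. Qed.

Lemma J_cpow_l c m z : c <> [] -> (J (cpow c (S m)) z <-> J c z).
Proof. intros hc. induction m. simpl. rewrite app_nil_r. tauto.
  change (cpow c (S (S m))) with (c ++ cpow c (S m)). rewrite J_app_l. exact IHm.
  apply cpow_ne; auto. Qed.

Lemma red_cpow c m : c <> [] -> reduced H c -> J c c -> reduced H (cpow c (S m)).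
Proof. intros hc r j. induction m. simpl. rewrite app_nil_r; auto.
  change (cpow c (S (S m))) with (c ++ cpow c (S m)). apply red_app. split; auto. split; auto.
  simpl. rewrite J_app_r; auto. Qed.

Lemma cyc_decomp : forall n w, length w <= n -> reduced H w -> w <> [] ->
  exists u c, w = u ++ c ++ winv u /\ c <> [] /\ J c c.
Proof.
  induction n as [|n IH]; intros w hl r hne.
  destruct w; simpl in hl; [congruence|lia].
  destruct (classic (J w w)) as [hj|hj].
  - exists [], w. simpl. rewrite app_nil_r. auto.
  - destruct w as [|a w0]. congruence.
    destruct w0 as [|x w0']. { exfalso. apply hj. simpl. unfold cancel. intros [_ h]; auto. }
    destruct (exists_last (l := x :: w0') ltac:(discriminate)) as [mid [b E]].
    rewrite E in *. clear E x w0'.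
    assert (hc : cancel b a).
    { apply NNPP. intro h. apply hj. unfold J. change (a :: mid ++ [b]) with ((a :: mid) ++ [b]).
      rewrite last_last. exact h. }
    destruct mid as [|x mid'].
    + exfalso. change ([] ++ [b]) with [b] in r. apply red_cons2 in r. apply (proj1 r). apply cancel_sym; auto.
    + change (a :: (x :: mid') ++ [b]) with ([a] ++ (x :: mid') ++ [b]) in r.
      apply red_app in r. destruct r as [_ [r _]]. apply red_app in r. destruct r as [r _].
      destruct (IH (x :: mid')) as [u [c [E [hc1 hc2]]]]; auto.
      simpl in hl |- *. rewrite ?length_app in hl. simpl in hl. lia. discriminate.
      exists (a :: u), c. split; auto.
      rewrite E. rewrite winv_cons. assert (b = linv a).
      { destruct a as [ba xa], b as [bb xb]. unfold cancel, linv in *; simpl in *. destruct hc as [h1 h2]; subst.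
        f_equal. destruct ba, bb; simpl in *; congruence. }

      subst b. simpl. rewrite <- !app_assoc. reflexivity.
Qed.

Lemma pow_bound w m : word_over H B w -> reduced H w -> w <> [] -> 1 <= m ->
  exists W, word_over H B W /\ reduced H W /\ ev W = gpow H (ev w) m /\
    length w + m - 1 <= length W.
Proof.
  intros o r hne hm. destruct (cyc_decomp (length w) w (le_n _) r hne) as [u [c [E [hc hj]]]].
  destruct m as [|m]. lia.
  exists (u ++ cpow c (S m) ++ winv u).
  rewrite E in o, r. apply over_app in o. destruct o as [ou o]. apply over_app in o. destruct o as [oc ov].
  apply red_app in r. destruct r as [ru [r j1]]. apply red_app in r. destruct r as [rc [rv j2]].
  split; [|split; [|split]].
  - apply over_app; split; auto. apply over_app; split; auto. apply over_cpow; auto.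
  - apply red_app. split; auto. split.
    + apply red_app. split. apply red_cpow; auto. split; auto. apply J_cpow_l; auto.
    + rewrite J_app_r. 2: apply cpow_ne; auto. rewrite J_app_r in j1 by auto.
      destruct u; simpl; auto. destruct c; [congruence|]. simpl. exact j1.
  - rewrite E. rewrite !ev_app, ev_cpow, ev_winv.
    replace (ev u ** (ev c ** (ev u)^-)) with (ev u ** ev c ** (ev u)^-) by (symmetry; apply gmul_assoc).
    rewrite (gpow_conj H (ev u) (ev c)). rewrite gmul_assoc. reflexivity.
  - rewrite E, !length_app, length_cpow. destruct c; [congruence|]. simpl. nia.
Qed.

End Basis.
End Words.

End P2.
Import P2.

Module P3.
Import ListNotations.
Local Open Scope nat_scope.

Section Alg.
Variable H : group.
Notation "x ** y" := (gmul H x y) (at level 40, left associativity).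
Notation "x ^-" := (ginv H x) (at level 30).
Notation e := (gone H).
Local Notation ev := (word_eval H).

Lemma gen_subgroup (X : H -> Prop) :
  is_subgroup H (fun y => exists w, word_over H X w /\ ev w = y).
Proof. split; [|split].
  - exists []. split; auto. intros l [].
  - intros a b [w1 [o1 <-]] [w2 [o2 <-]]. exists (w1 ++ w2). split. apply over_app; auto. apply ev_app.
  - intros a [w [o <-]]. exists (winv H w). split. apply over_winv; auto. apply ev_winv.
Qed.

Lemma gen_countable (gen : nat -> H) :
  countable_set (fun y => exists w, word_over H (fun z => exists q, gen q = z) w /\ ev w = y).
Proof.
  set (letter := fun c => let (p, q) := Cantor.of_nat c in (Nat.eqb p 0, gen q)).
  set (decl := fix decl k c := match k with 0 => [] | S k' =>
     let (a, b) := Cantor.of_nat c in letter a :: decl k' b end).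
  right. exists (fun c => let (k, r) := Cantor.of_nat c in ev (decl k r)). split.
  - intros c. destruct (Cantor.of_nat c) as [k r]. exists (decl k r). split; auto.
    revert r. induction k; intros r. intros l [].
    simpl. destruct (Cantor.of_nat r) as [a b]. apply over_cons. split; auto.
    unfold letter. destruct (Cantor.of_nat a). simpl. eauto.
  - intros y [w [o <-]].
    assert (exists r, decl (length w) r = w) as [r hr].
    { induction w as [|[bb z] w IH]. exists 0. reflexivity.
      apply over_cons in o. destruct o as [[q hq] o]. destruct (IH o) as [r hr].
      exists (Cantor.to_nat (Cantor.to_nat (if bb then 0 else 1, q), r)).
      cbn -[Cantor.of_nat Cantor.to_nat]. rewrite Cantor.cancel_of_to. rewrite hr. unfold letter.
      rewrite Cantor.cancel_of_to. simpl in hq. subst z. destruct bb; reflexivity. }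
    exists (Cantor.to_nat (length w, r)). rewrite Cantor.cancel_of_to, hr. reflexivity.
Qed.

Fixpoint lsum (l : list nat) : nat := match l with [] => 0 | a :: r => a + lsum r end.
Lemma lsum_in a l : In a l -> a <= lsum l.
Proof. induction l; simpl. intros []. intros [->|h]. lia. specialize (IHl h). lia. Qed.

Theorem algebra_core (Hal : aleph1_free H) (l : list H) (F : H -> Prop)
  (hF : generates H (fun y => In y l) F) (f x : nat -> H) (m Lf : nat -> nat) :
  (forall n, F (f n) /\ f n <> e) ->
  (forall n, exists w, word_over H (fun y => In y l) w /\ ev w = f n /\ length w <= Lf n) ->
  (forall n, n * Lf n + 2 <= m n) ->
  (forall n, x n = f n ** gpow H (x (S n)) (m n)) -> False.
Proof.
  intros hf hw hm hx.
  set (gen := fun q => let (i, j) := Cantor.of_nat q in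
                       match i with 0 => nth j l (x 0) | _ => x j end).
  set (Gen := fun z => exists q, gen q = z).
  set (S := fun y => exists w, word_over H Gen w /\ ev w = y).
  assert (hS : is_subgroup H S) by apply gen_subgroup.
  assert (hC : countable_set S) by apply gen_countable.
  destruct (Hal S hS hC) as [B [hgen hfree]].
  assert (Sx : forall n, S (x n)).
  { intro n. exists [(true, x n)]. split. apply over_cons. split. exists (Cantor.to_nat (1, n)).
    unfold gen. rewrite Cantor.cancel_of_to. reflexivity. intros _ [].
    simpl. apply gmul_1r. }
  assert (Sl : forall a, In a l -> S a).
  { intros a ha. destruct (In_nth l a (x 0) ha) as [j [_ hj]].
    exists [(true, a)]. split. apply over_cons. split. exists (Cantor.to_nat (0, j)).
    unfold gen. rewrite Cantor.cancel_of_to. exact hj. intros _ [].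
    simpl. apply gmul_1r. }
  destruct hS as [S1 [Smul Sinv]].
  assert (Sw : forall w, word_over H (fun y => In y l) w -> S (ev w)).
  { induction w as [|a w IH]; intro o. exact S1. apply over_cons in o. destruct o as [oa o].
    rewrite ev_cons. apply Smul; auto. unfold lv. destruct (fst a); auto. }
  set (Nf := fun y => epsilon (inhabits 0) (fun n => isN H B y n)).
  assert (hN : forall y, S y -> isN H B y (Nf y)).
  { intros y hy. unfold Nf. apply epsilon_spec. apply exN. apply hgen. exact hy. }
  set (C := lsum (map Nf l)).
  assert (hletter : forall a, In (snd a) l -> Nf (lv H a) <= C).
  { intros [b a] ha. simpl in ha. assert (Nf a <= C) by (apply lsum_in, in_map; auto).
    unfold lv; simpl. destruct b; auto.
    pose proof (isN_inv H B a _ _ (hN a (Sl a ha)) (hN _ (Sinv _ (Sl a ha)))). lia. }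
  assert (hwb : forall w, word_over H (fun y => In y l) w -> Nf (ev w) <= length w * C).
  { induction w as [|a w IH]; intro o.
    - simpl. pose proof (isN_fun H B _ _ _ (hN _ S1) (isN_one H B)). lia.
    - apply over_cons in o. destruct o as [oa o]. rewrite ev_cons.
      assert (Sa : S (lv H a)). { unfold lv. destruct (fst a); auto. }
      pose proof (isN_mul H B _ _ _ _ _ (hN _ Sa) (hN _ (Sw w o)) (hN _ (Smul _ _ Sa (Sw w o)))).
      specialize (IH o). specialize (hletter a oa). simpl. lia. }
  assert (hc : forall n, Nf ((f n)^-) <= Lf n * C).
  { intro n. destruct (hw n) as [w [o [E L]]].
    pose proof (isN_inv H B _ _ _ (hN _ (Sw w o)) (hN _ (Sinv _ (Sw w o)))).
    specialize (hwb w o). rewrite E in *. nia. }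
  assert (Sf : forall n, S (f n)).
  { intro n. destruct (hw n) as [w [o [E _]]]. rewrite <- E. auto. }
  assert (step : forall n, C <= n -> x (Datatypes.S n) <> e -> Nf (x (Datatypes.S n)) < Nf (x n)).
  { intros n hn hne.
    set (y := x (Datatypes.S n)).
    destruct (isN_attained H B _ _ (hN y (Sx _))) as [w [o [r [E L]]]].
    assert (w <> []) by (intro; subst w; apply hne; exact (eq_sym E)).
    destruct (pow_bound H B w (m n) o r H0) as [W [oW [rW [EW LW]]]].
    specialize (hm n). nia.
    pose proof (reduced_isN H B hfree W oW rW) as hW.
    assert (Eq : gpow H y (m n) = (f n)^- ** x n).
    { rewrite (hx n). rewrite gmul_assoc, gmul_Vl, gmul_1l. reflexivity. }
    rewrite EW, E, Eq in hW.
    pose proof (isN_mul H B _ _ _ _ _ (hN _ (Sinv _ (Sf n))) (hN _ (Sx n)) hW).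
    specialize (hc n). specialize (hm n). rewrite L in LW.
    assert (n * Lf n >= C * Lf n) by nia. lia. }
  assert (nz : forall n, C <= n -> x (Datatypes.S n) <> e).
  { intros n hn h0.
    assert (h2 : x (Datatypes.S (Datatypes.S n)) <> e).
    { intro h. pose proof (hx (Datatypes.S n)) as E. rewrite h0, h in E.
      apply (proj2 (hf (Datatypes.S n))).
      assert (gpow H e (m (Datatypes.S n)) = e) as P.
      { clear. induction (m (Datatypes.S n)); simpl; auto. rewrite IHn0. apply gmul_1l. }
      rewrite P, gmul_1r in E. auto. }
    pose proof (step (Datatypes.S n) ltac:(lia) h2). rewrite h0 in H0.
    pose proof (isN_fun H B _ _ _ (hN _ S1) (isN_one H B)). unfold e in *. lia. }
  assert (desc : forall k, Nf (x (C + k)) + k <= Nf (x C)).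
  { induction k. rewrite !Nat.add_0_r. lia.
    pose proof (step (C + k) ltac:(lia) (nz (C + k) ltac:(lia))).
    replace (C + Datatypes.S k) with (Datatypes.S (C + k)) by lia. lia. }
  specialize (desc (Datatypes.S (Nf (x C)))). lia.
Qed.
End Alg.

End P3.
Import P3.

Module P4.
Import ListNotations.
Local Open Scope nat_scope.

Section Topo.
Variable T : Type.
Variable t : topology T.

Lemma open_ext (A B : T -> Prop) : (forall x, A x <-> B x) -> is_open t A -> is_open t B.
Proof. intros h hA. replace B with A; auto. apply functional_extensionality; intro x.
  apply propositional_extensionality; auto. Qed.

Lemma open_local (A : T -> Prop) :
  (forall y, A y -> exists U, is_open t U /\ U y /\ forall z, U z -> A z) -> is_open t A.
Proof. intros h. apply (open_ext (fun x => exists U, (is_open t U /\ forall z, U z -> A z) /\ U x)).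
  - intros x. split. intros [U [[_ hU] hx]]; auto. intros hx. destruct (h x hx) as [U [o [hU hs]]]. eauto.
  - apply open_union. intros U [o _]; auto. Qed.

Definition closed (A : T -> Prop) := is_open t (fun x => ~ A x).
Definition cont_at (f : T -> T) x := forall W, is_open t W -> W (f x) ->
  exists U, is_open t U /\ U x /\ forall y, U y -> W (f y).
Definition cont (f : T -> T) := forall x, cont_at f x.

Lemma open_pre f W : cont f -> is_open t W -> is_open t (fun y => W (f y)).
Proof. intros hf hW. apply open_local. intros y hy. destruct (hf y W hW hy) as [U [o [hU hs]]]. eauto. Qed.

Lemma closed_pre f A : cont f -> closed A -> closed (fun y => A (f y)).
Proof. intros hf hA. unfold closed. apply (open_pre f _ hf hA). Qed.

Lemma closed_inter A B : closed A -> closed B -> closed (fun x => A x /\ B x).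
Proof. unfold closed. intros hA hB. apply open_local. intros y hy.
  apply not_and_or in hy. destruct hy as [hy|hy]; [exists (fun x => ~ A x)|exists (fun x => ~ B x)];
  repeat split; auto; intros z hz [h1 h2]; auto. Qed.

Definition closure (W : T -> Prop) y := forall U, is_open t U -> U y -> exists z, U z /\ W z.

Lemma closure_closed W : closed (closure W).
Proof. unfold closed. apply open_local. intros y hy. unfold closure in hy.
  apply not_all_ex_not in hy. destruct hy as [U hU].
  apply imply_to_and in hU. destruct hU as [o hU]. apply imply_to_and in hU. destruct hU as [hy hU].
  exists U. split; [exact o| split; [exact hy|]]. intros z hz hc. apply hU. destruct (hc U o hz) as [x hx]. eauto. Qed.

Lemma closure_sup W y : W y -> closure W y.
Proof. intros h U _ hU. eauto. Qed.

Lemma compact_closed_sub K A : Defs.compact t K -> closed A -> Defs.compact t (fun x => K x /\ A x).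
Proof.
  intros hK hA Fam hF hc.
  destruct (hK (fun U => Fam U \/ U = (fun x => ~ A x))) as [l [hl hcov]].
  - intros U [h| ->]; auto.
  - intros x hx. destruct (classic (A x)) as [ha|ha].
    + destruct (hc x (conj hx ha)) as [U [h1 h2]]. eauto.
    + exists (fun x => ~ A x). auto.
  - assert (forall l, (forall U, In U l -> Fam U \/ U = (fun x => ~ A x)) ->
      exists l', (forall U, In U l' -> Fam U) /\
        forall x, A x -> (exists U, In U l /\ U x) -> exists U, In U l' /\ U x) as Hf.
    { induction l0 as [|U0 l0 IH]; intros h.
      - exists []. split. intros _ []. intros x _ [U [[] _]].
      - destruct IH as [l' [h1 h2]]. intros U hU; apply h; simpl; auto.
        destruct (h U0 (or_introl eq_refl)) as [hU0|hU0].
        + exists (U0 :: l'). split. intros U [<-|hU]; auto.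
          intros x hx [U [[<-|hU] hxU]]. exists U0; simpl; auto.
          destruct (h2 x hx ltac:(eauto)) as [V [hV hxV]]. exists V; simpl; auto.
        + exists l'. split; auto. intros x hx [U [[<-|hU] hxU]].
          subst U0. contradiction. eauto. }
    destruct (Hf l hl) as [l' [h1 h2]]. exists l'. split; auto.
    intros x [hx ha]. apply h2; auto.
Qed.

Lemma hausdorff_compact_closed K : hausdorff t -> Defs.compact t K -> closed K.
Proof.
  intros hH hK. unfold closed. apply open_local. intros y hy.
  destruct (hK (fun U => exists V, is_open t U /\ is_open t V /\ V y /\ forall z, ~ (U z /\ V z)))
    as [l [hl hcov]].
  - intros U [V [o _]]; auto.
  - intros x hx. assert (x <> y) by (intro; subst; auto).
    destruct (hH x y H) as [U [V [o1 [o2 [h1 [h2 h3]]]]]]. exists U. split; eauto.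
  - assert (forall l, (forall U, In U l -> exists V, is_open t U /\ is_open t V /\ V y /\ forall z, ~ (U z /\ V z)) ->
      exists V, is_open t V /\ V y /\ forall U, In U l -> forall z, ~ (U z /\ V z)) as Hf.
    { induction l0 as [|U0 l0 IH]; intros h.
      - exists (fun _ => True). split. apply open_full. split. exact I. intros _ [].
      - destruct IH as [V [o [hV hd]]]. intros; apply h; simpl; auto.
        destruct (h U0 (or_introl eq_refl)) as [V0 [_ [o0 [hV0 hd0]]]].
        exists (fun x => V x /\ V0 x). split. apply open_inter; auto. split; auto.
        intros U [<-|hU] z [h1 [h2 h3]]. apply (hd0 z); auto. apply (hd U hU z); auto. }
    destruct (Hf l hl) as [V [o [hV hd]]]. exists V. repeat split; auto.
    intros z hz hKz. destruct (hcov z hKz) as [U [hU hUz]]. apply (hd U hU z); auto.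
Qed.

Lemma hausdorff_point_closed w : hausdorff t -> closed (fun y => y = w).
Proof. intros hH. unfold closed. apply open_local. intros y hy.
  destruct (hH y w hy) as [U [V [o1 [o2 [h1 [h2 h3]]]]]]. exists U. repeat split; auto.
  intros z hz ->. apply (h3 w); auto. Qed.

Lemma compact_image f K : cont f -> Defs.compact t K -> Defs.compact t (fun y => exists z, K z /\ f z = y).
Proof.
  intros hf hK Fam hF hc.
  destruct (hK (fun V => exists U, Fam U /\ V = (fun z => U (f z)))) as [l [hl hcov]].
  - intros V [U [hU ->]]. apply open_pre; auto.
  - intros z hz. destruct (hc (f z) ltac:(eauto)) as [U [hU hUz]]. exists (fun z => U (f z)). split; eauto.
  - assert (forall l, (forall V, In V l -> exists U, Fam U /\ V = (fun z => U (f z))) ->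
      exists l', (forall U, In U l' -> Fam U) /\
        forall z, (exists V, In V l /\ V z) -> exists U, In U l' /\ U (f z)) as Hf.
    { induction l0 as [|V0 l0 IH]; intros h.
      - exists []. split. intros _ []. intros z [V [[] _]].
      - destruct IH as [l' [h1 h2]]. intros; apply h; simpl; auto.
        destruct (h V0 (or_introl eq_refl)) as [U0 [hU0 ->]].
        exists (U0 :: l'). split. intros U [<-|hU]; auto.
        intros z [V [[<-|hV] hVz]]. exists U0; simpl; auto.
        destruct (h2 z ltac:(eauto)) as [U [hU hUz]]. exists U; simpl; auto. }
    destruct (Hf l hl) as [l' [h1 h2]]. exists l'. split; auto.
    intros y [z [hz <-]]. apply h2. auto.
Qed.

Lemma fip K (E : nat -> T -> Prop) : Defs.compact t K ->
  (forall j, closed (E j)) -> (forall j y, E j y -> K y) ->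
  (forall j y, E (S j) y -> E j y) -> (forall j, exists y, E j y) ->
  exists y, forall j, E j y.
Proof.
  intros hK hc hs hd hn. apply NNPP. intro hno.
  destruct (hK (fun U => exists j, U = (fun y => ~ E j y))) as [l [hl hcov]].
  - intros U [j ->]. apply hc.
  - intros x hx. assert (exists j, ~ E j x) as [j hj].
    { apply not_all_ex_not. intro h. apply hno. eauto. }
    exists (fun y => ~ E j y). eauto.
  - assert (mono : forall j k y, j <= k -> E k y -> E j y).
    { intros j k y hjk. induction hjk; auto. }
    assert (forall l, (forall U, In U l -> exists j, U = (fun y => ~ E j y)) ->
      exists M, forall U, In U l -> forall y, U y -> ~ E M y) as Hf.
    { induction l0 as [|U0 l0 IH]; intros h.
      - exists 0. intros _ [].
      - destruct IH as [M hM]. intros; apply h; simpl; auto.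
        destruct (h U0 (or_introl eq_refl)) as [j ->].
        exists (Nat.max M j). intros U [<-|hU] y hy hE.
        apply hy. apply (mono j (Nat.max M j)); auto. lia.
        apply (hM U hU y hy). apply (mono M (Nat.max M j)); auto. lia. }
    destruct (Hf l hl) as [M hM]. destruct (hn M) as [y hy].
    destruct (hcov y (hs M y hy)) as [U [hU hUy]]. apply (hM U hU y hUy hy).
Qed.
End Topo.

Section GTopo.
Variable G : group.
Variable t : topology G.
Hypothesis TG : topological_group G t.

Lemma cont_const c : cont G t (fun _ => c).
Proof. intros x W o hW. exists (fun _ => True). split. apply open_full. auto. Qed.

Lemma cont_id : cont G t (fun y => y).
Proof. intros x W o hW. exists W. auto. Qed.

Lemma cont_mul f h : cont G t f -> cont G t h -> cont G t (fun y => gmul G (f y) (h y)).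
Proof. intros hf hh x W o hW. destruct (proj1 TG W (f x) (h x) o hW) as [U [V [oU [oV [hU [hV hUV]]]]]].
  destruct (hf x U oU hU) as [U1 [o1 [h1 s1]]]. destruct (hh x V oV hV) as [V1 [o2 [h2 s2]]].
  exists (fun y => U1 y /\ V1 y). split. apply open_inter; auto. split; auto.
  intros y [a b]. apply hUV; auto. Qed.

Lemma cont_inv : cont G t (fun y => ginv G y).
Proof. intros x W o hW. exists (fun y => W (ginv G y)). split. apply (proj2 TG); auto. auto. Qed.

Lemma cont_comp f h : cont G t f -> cont G t h -> cont G t (fun y => f (h y)).
Proof. intros hf hh x W o hW. destruct (hf (h x) W o hW) as [U [oU [hU sU]]].
  destruct (hh x U oU hU) as [V [oV [hV sV]]]. exists V. auto. Qed.

Lemma cont_pow m : cont G t (fun y => gpow G y m).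
Proof. induction m; simpl. apply cont_const. apply cont_mul; auto. apply cont_id. Qed.

Lemma regular V : is_open t V -> V (gone G) ->
  exists W, is_open t W /\ W (gone G) /\ forall y, closure G t W y -> V y.
Proof.
  intros o hV. rewrite <- (gmul_1l G (gone G)) in hV.
  destruct (proj1 TG V _ _ o hV) as [A [B [oA [oB [hA [hB hAB]]]]]].
  exists A. split; auto. split; auto. intros y hy.
  assert (cN : cont G t (fun z => gmul G (ginv G z) y)) by (apply cont_mul; [apply cont_inv|apply cont_const]).
  destruct (hy _ (open_pre G t _ B cN oB)) as [z [hz1 hz2]].
  simpl. rewrite gmul_Vl. exact hB.
  replace y with (gmul G z (gmul G (ginv G z) y)). apply hAB; auto.
  rewrite gmul_assoc, gmul_Vr, gmul_1l. reflexivity.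
Qed.

Lemma regLC V : locally_compact t -> is_open t V -> V (gone G) ->
  exists O Z, is_open t O /\ O (gone G) /\ Defs.compact t Z /\ (forall y, O y -> Z y) /\ (forall y, Z y -> V y).
Proof.
  intros hlc o hV. destruct (hlc (gone G)) as [U1 [K1 [o1 [h1 [c1 s1]]]]].
  destruct (regular V o hV) as [W [oW [hW sW]]].
  exists (fun y => U1 y /\ W y), (fun y => K1 y /\ closure G t W y).
  split. apply open_inter; auto. split; auto. split.
  apply compact_closed_sub; auto. apply closure_closed.
  split. intros y [a b]. split; auto. apply closure_sup; auto.
  intros y [a b]. auto.
Qed.
End GTopo.

End P4.
Import P4.

Module P5.
Import ListNotations.
Local Open Scope nat_scope.

Section Construct.
Variable G : group.
Variable t : topology G.
Hypothesis TG : topological_group G t.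
Variable P : G -> Prop.
Hypothesis hP : forall U, is_open t U -> U (gone G) -> exists g, U g /\ P g.
Variable M : nat -> G -> nat.

Definition psi (g : nat -> G) n y := gmul G (g n) (gpow G y (M n (g n))).
Fixpoint Phi (g : nat -> G) n j y := match j with 0 => y | S j' => psi g n (Phi g (S n) j' y) end.

Lemma Phi_S_r g j : forall n y, Phi g n (S j) y = Phi g n j (psi g (n + j) y).
Proof. induction j; intros n y. simpl. rewrite Nat.add_0_r. reflexivity.
  change (Phi g n (S (S j)) y) with (psi g n (Phi g (S n) (S j) y)). rewrite IHj.
  replace (S n + j) with (n + S j) by lia. reflexivity. Qed.

Lemma Phi_ext g g' j : forall n y, (forall i, n <= i < n + j -> g i = g' i) -> Phi g n j y = Phi g' n j y.
Proof. induction j; intros n y h. reflexivity. simpl. rewrite (IHj (S n)). unfold psi. rewrite (h n). reflexivity.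
  lia. intros i hi. apply h. lia. Qed.

Lemma psi_cont g n : cont G t (psi g n).
Proof. unfold psi. apply cont_mul; auto. apply cont_const. apply cont_pow; auto. Qed.

Lemma Phi_cont g j : forall n, cont G t (Phi g n j).
Proof. induction j; intros n; simpl. apply cont_id. apply cont_comp; auto. apply psi_cont. Qed.

Lemma gpow_one m : gpow G (gone G) m = gone G.
Proof. induction m; simpl; auto. rewrite IHm. apply gmul_1l. Qed.

Lemma psi_one g n : psi g n (gone G) = g n.
Proof. unfold psi. rewrite gpow_one, gmul_1r. reflexivity. Qed.

Section LC.
Hypothesis LC : locally_compact t.
Hypothesis HD : hausdorff t.

Definition st := ((G -> Prop) * (G -> Prop))%type.
Definition inv (s : st) := is_open t (fst s) /\ fst s (gone G) /\ Defs.compact t (snd s) /\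
  forall y, fst s y -> snd s y.
Definition spec k (s : st) (tr : G * st) := let (g, s') := tr in
  fst s g /\ P g /\ inv s' /\ forall y, snd s' y -> fst s (gmul G g (gpow G y (M k g))).

Lemma step_ex k s : inv s -> exists tr, spec k s tr.
Proof.
  intros [o [h1 _]]. destruct (hP _ o h1) as [g [hg Pg]].
  assert (c : cont G t (fun y => gmul G g (gpow G y (M k g)))).
  { apply cont_mul; auto. apply cont_const. apply cont_pow; auto. }
  destruct (c (gone G) (fst s) o) as [V [oV [hV sV]]].
  rewrite gpow_one, gmul_1r. exact hg.
  destruct (regLC G t TG V LC oV hV) as [O [Z [oO [hO [cZ [s1 s2]]]]]].
  exists (g, (O, Z)). simpl. repeat split; auto.
Qed.

Definition nxt k s : G * st := epsilon (inhabits (gone G, s)) (spec k s).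

Definition s0 : st := let U := epsilon (inhabits (fun _ => True)) (fun U => exists K,
   is_open t U /\ U (gone G) /\ Defs.compact t K /\ forall y, U y -> K y) in
  (U, epsilon (inhabits (fun _ => True)) (fun K => is_open t U /\ U (gone G) /\ Defs.compact t K /\ forall y, U y -> K y)).

Lemma s0_inv : inv s0.
Proof. unfold s0. cbv zeta. set (U := epsilon _ _).
  assert (hU : exists K, is_open t U /\ U (gone G) /\ Defs.compact t K /\ forall y, U y -> K y).
  { unfold U. apply epsilon_spec. destruct (LC (gone G)) as [U0 [K0 h]]. eauto. }
  pose proof (epsilon_spec (inhabits (fun _ => True)) _ hU) as h. unfold inv. simpl. exact h. Qed.

Fixpoint sts k : st := match k with 0 => s0 | S k' => snd (nxt k' (sts k')) end.
Definition gs k : G := fst (nxt k (sts k)).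

Lemma sts_spec k : inv (sts k) /\ spec k (sts k) (nxt k (sts k)).
Proof. induction k.
  - split. apply s0_inv. unfold nxt. apply epsilon_spec. apply step_ex. apply s0_inv.
  - assert (hs : spec k (sts k) (nxt k (sts k))) by tauto.
    assert (inv (sts (S k))). { change (sts (S k)) with (snd (nxt k (sts k))). revert hs. destruct (nxt k (sts k)) as [g s0]. simpl. tauto. }
    split; auto. unfold nxt. apply epsilon_spec. apply step_ex; auto. Qed.

Definition Z k := snd (sts k).

Lemma Z_compact k : Defs.compact t (Z k).
Proof. apply (proj1 (sts_spec k)). Qed.
Lemma Z_one k : Z k (gone G).
Proof. destruct (proj1 (sts_spec k)) as [_ [h1 [_ h2]]]. apply h2, h1. Qed.
Lemma P_gs k : P (gs k).
Proof. pose proof (proj2 (sts_spec k)) as hs. unfold gs. revert hs. destruct (nxt k (sts k)). simpl. tauto. Qed.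
Lemma Z_psi k y : Z (S k) y -> Z k (psi gs k y).
Proof. intros h. pose proof (proj2 (sts_spec k)) as hs. destruct (proj1 (sts_spec k)) as [_ [_ [_ hO]]].
  apply hO. unfold Z in h. simpl in h. unfold psi, gs. destruct (nxt k (sts k)) as [g s'].
  simpl in *. apply hs. exact h. Qed.

Definition Tn n j y := exists z, Z (n + j) z /\ Phi gs n j z = y.

Lemma Tn_closed n j : closed G t (Tn n j).
Proof. apply hausdorff_compact_closed; auto. apply compact_image. apply Phi_cont. apply Z_compact. Qed.

Lemma Tn_dec n j y : Tn n (S j) y -> Tn n j y.
Proof. intros [z [hz <-]]. rewrite Phi_S_r. exists (psi gs (n + j) z). split; auto.
  apply Z_psi. replace (S (n + j)) with (n + S j) by lia. auto. Qed.

Lemma Tn_Z n j y : Tn n j y -> Z n y.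
Proof. revert y. induction j; intros y h. destruct h as [z [hz <-]]. rewrite Nat.add_0_r in hz. exact hz.
  apply IHj, Tn_dec, h. Qed.

Lemma Tn_ne n j : exists y, Tn n j y.
Proof. exists (Phi gs n j (gone G)). exists (gone G). split; auto. apply Z_one. Qed.

Definition Wn n y := forall j, Tn n j y.

Lemma W0 : exists y, Wn 0 y.
Proof. apply (fip G t (Z 0) (Tn 0)). apply Z_compact. apply Tn_closed. apply Tn_Z. apply Tn_dec. apply Tn_ne. Qed.

Lemma W_step n w : Wn n w -> exists v, Wn (S n) v /\ psi gs n v = w.
Proof.
  intros hw. destruct (fip G t (Z (S n)) (fun j v => Tn (S n) j v /\ psi gs n v = w)) as [v hv].
  - apply Z_compact.
  - intro j. apply closed_inter. apply Tn_closed. apply (closed_pre G t (psi gs n) (fun y => y = w)).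
    apply psi_cont. apply hausdorff_point_closed; auto.
  - intros j y [h _]. apply (Tn_Z _ j); auto.
  - intros j y [h1 h2]. split; auto. apply Tn_dec; auto.
  - intros j. destruct (hw (S j)) as [z [hz E]]. exists (Phi gs (S n) j z). split.
    exists z. split; auto. replace (S n + j) with (n + S j) by lia. auto. rewrite <- E. reflexivity.
  - exists v. split. intro j. apply hv. apply (hv 0).
Qed.

Fixpoint hs n : G := match n with
  | 0 => epsilon (inhabits (gone G)) (Wn 0)
  | S n' => epsilon (inhabits (gone G)) (fun v => Wn (S n') v /\ psi gs n' v = hs n') end.

Lemma hs_spec n : Wn n (hs n) /\ psi gs n (hs (S n)) = hs n.
Proof. assert (forall n, Wn n (hs n)) as HW.
  { induction n0. exact (epsilon_spec (inhabits (gone G)) (Wn 0) W0).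
    exact (proj1 (epsilon_spec (inhabits (gone G)) (fun v => Wn (S n0) v /\ psi gs n0 v = hs n0)
      (W_step n0 _ IHn0))). }
  split; auto. exact (proj2 (epsilon_spec (inhabits (gone G)) (fun v => Wn (S n) v /\ psi gs n v = hs n)
      (W_step n _ (HW n)))). Qed.

Theorem construct_LC : exists g h : nat -> G, (forall n, P (g n)) /\
  forall n, h n = gmul G (g n) (gpow G (h (S n)) (M n (g n))).
Proof. exists gs, hs. split. apply P_gs. intro n. symmetry. apply (proj2 (hs_spec n)). Qed.
End LC.
End Construct.

End P5.
Import P5.

Module P6.
Import ListNotations.
Local Open Scope R_scope.

Section Metric.
Variable G : group.
Variable t : topology G.
Hypothesis TG : topological_group G t.
Variable P : G -> Prop.
Hypothesis hP : forall U, is_open t U -> U (gone G) -> exists g, U g /\ P g.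
Variable M : nat -> G -> nat.
Variable d : G -> G -> R.
Hypothesis dm : is_metric d.
Hypothesis di : metric_induces d t.
Hypothesis dc : metric_complete d.

Lemma d_sym x y : d x y = d y x.
Proof. apply (proj1 (proj2 (proj2 dm))). Qed.
Lemma d_tri x y z : d x z <= d x y + d y z.
Proof. apply (proj2 (proj2 (proj2 dm))). Qed.
Lemma d_pos x y : 0 <= d x y.
Proof. apply (proj1 dm). Qed.
Lemma d_zero x y : d x y = 0 -> x = y.
Proof. apply (proj1 (proj2 dm)). Qed.

Lemma ball_open c r : is_open t (fun y => d c y < r).
Proof. apply di. intros y hy. exists (r - d c y). split. lra. intros z hz.
  pose proof (d_tri c y z). lra. Qed.

Lemma cont_metric f x eps : cont G t f -> 0 < eps ->
  exists del, 0 < del /\ forall y, d x y < del -> d (f x) (f y) < eps.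
Proof. intros hf he. destruct (hf x (fun y => d (f x) y < eps) (ball_open _ _)) as [U [o [hU sU]]].
  assert (d (f x) (f x) = 0) by (apply (proj1 (proj2 dm)); reflexivity). lra.
  destruct (proj1 (di U) o x hU) as [del [hd sd]]. exists del. split; auto. Qed.

Lemma fin_int (Q : nat -> G -> Prop) :
  (forall n, exists U, is_open t U /\ U (gone G) /\ forall y, U y -> Q n y) ->
  forall k, exists U, is_open t U /\ U (gone G) /\ forall y, U y -> forall n, (n <= k)%nat -> Q n y.
Proof. intros h k. induction k.
  - destruct (h 0%nat) as [U [o [h1 h2]]]. exists U. repeat split; auto.
    intros y hy n hn. replace n with 0%nat by lia. auto.
  - destruct IHk as [U [o [h1 h2]]]. destruct (h (S k)) as [V [oV [hV sV]]].
    exists (fun y => U y /\ V y). split. apply open_inter; auto. split; auto.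
    intros y [a b] n hn. destruct (Nat.eq_dec n (S k)). subst; auto. apply h2; auto. lia.
Qed.

Definition cnd k (p : nat -> G) (g : G) := P g /\ forall n, (n <= k)%nat ->
  d (Phi G M p n (k - n) (gone G)) (Phi G M p n (k - n) g) < (/2) ^ k.

Lemma pow2_pos k : 0 < (/2) ^ k.
Proof. apply pow_lt. lra. Qed.

Lemma cnd_ex k p : exists g, cnd k p g.
Proof.
  destruct (fin_int (fun n y => d (Phi G M p n (k - n) (gone G)) (Phi G M p n (k - n) y) < (/2) ^ k)) with (k := k)
    as [U [o [h1 h2]]].
  - intro n. destruct (cont_metric (Phi G M p n (k - n)) (gone G) ((/2)^k) (Phi_cont G t TG M p _ _) (pow2_pos k))
      as [del [hd sd]].
    exists (fun y => d (gone G) y < del). split. apply ball_open. split; auto.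
    assert (d (gone G) (gone G) = 0) by (apply (proj1 (proj2 dm)); reflexivity). lra.
  - destruct (hP U o h1) as [g [hg Pg]]. exists g. split; auto.
Qed.

Definition chs k p := epsilon (inhabits (gone G)) (cnd k p).
Fixpoint pre k : nat -> G := match k with
  | 0 => fun _ => gone G
  | S k' => fun i => if Nat.eqb i k' then chs k' (pre k') else pre k' i end.
Definition gs i := pre (S i) i.

Lemma pre_agree k i : (i < k)%nat -> pre k i = gs i.
Proof. induction k; intros h. lia. simpl. destruct (Nat.eqb_spec i k).
  subst. unfold gs. simpl. rewrite Nat.eqb_refl. reflexivity. apply IHk. lia. Qed.

Lemma gs_cnd k : cnd k gs (gs k).
Proof.
  assert (E : gs k = chs k (pre k)). { unfold gs. simpl. rewrite Nat.eqb_refl. reflexivity. }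
  pose proof (epsilon_spec (inhabits (gone G)) (cnd k (pre k)) (cnd_ex k (pre k))) as h.
  fold (chs k (pre k)) in h. rewrite <- E in h. destruct h as [h1 h2]. split; auto.
  intros n hn. rewrite <- !(Phi_ext G M (pre k) gs). apply h2; auto.
  all: intros i hi; apply pre_agree; lia.
Qed.

Definition Q n j := Phi G M gs n j (gone G).

Lemma Q_step n j : d (Q n j) (Q n (S j)) < (/2) ^ j.
Proof. unfold Q. rewrite Phi_S_r, psi_one.
  destruct (gs_cnd (n + j)) as [_ h]. specialize (h n ltac:(lia)).
  replace (n + j - n)%nat with j in h by lia.
  assert ((/2) ^ (n + j) <= (/2) ^ j).
  { rewrite pow_add. assert (0 < (/2)^j) by apply pow2_pos.
    assert ((/2)^n <= 1). { clear. induction n; simpl. lra. assert (0 < (/2)^n) by apply pow2_pos. lra. }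
    nra. }
  lra. Qed.

Lemma Q_bound n j k : d (Q n j) (Q n (j + k)) <= 2 * (/2)^j - 2 * (/2)^(j + k).
Proof. induction k.
  - rewrite Nat.add_0_r. assert (d (Q n j) (Q n j) = 0) by (apply (proj1 (proj2 dm)); reflexivity). lra.
  - pose proof (d_tri (Q n j) (Q n (j + k)) (Q n (j + S k))).
    replace (j + S k)%nat with (S (j + k)) in * by lia.
    pose proof (Q_step n (j + k)). simpl pow. lra. Qed.

Lemma Q_near n j k : (j <= k)%nat -> d (Q n j) (Q n k) <= 2 * (/2)^j.
Proof. intros h. replace k with (j + (k - j))%nat by lia. pose proof (Q_bound n j (k - j)).
  pose proof (pow2_pos (j + (k - j))). lra. Qed.

Lemma small eps : 0 < eps -> exists N, forall j, (N <= j)%nat -> 2 * (/2)^j < eps.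
Proof. intros he. destruct (pow_lt_1_zero (/2) ltac:(rewrite Rabs_pos_eq; lra) (eps / 2) ltac:(lra)) as [N hN].
  exists N. intros j hj. specialize (hN j hj). rewrite Rabs_pos_eq in hN. lra.
  apply Rlt_le, pow2_pos. Qed.

Definition conv (u : nat -> G) l := forall eps, 0 < eps -> exists N, forall n, (N <= n)%nat -> d (u n) l < eps.

Lemma Q_conv n : exists l, conv (Q n) l.
Proof. apply dc. intros eps he. destruct (small eps he) as [N hN]. exists N. intros a b ha hb.
  destruct (Nat.le_ge_cases a b).
  - pose proof (Q_near n a b H). pose proof (hN a ha). lra.
  - pose proof (Q_near n b a H). pose proof (hN b hb). rewrite d_sym. lra. Qed.

Definition hs n := epsilon (inhabits (gone G)) (conv (Q n)).

Lemma hs_conv n : conv (Q n) (hs n).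
Proof. unfold hs. apply epsilon_spec, Q_conv. Qed.

Lemma conv_uniq u a b : conv u a -> conv u b -> a = b.
Proof. intros ha hb. apply d_zero. apply NNPP. intro hne.
  pose proof (d_pos a b). assert (hp : 0 < d a b / 2) by lra.
  destruct (ha _ hp) as [N1 h1]. destruct (hb _ hp) as [N2 h2].
  specialize (h1 (N1 + N2)%nat ltac:(lia)). specialize (h2 (N1 + N2)%nat ltac:(lia)).
  pose proof (d_tri a (u (N1 + N2)%nat) b). rewrite d_sym in h1. lra. Qed.

Lemma hs_rel n : hs n = psi G M gs n (hs (S n)).
Proof.
  apply (conv_uniq (fun j => Q n (S j))).
  - intros eps he. destruct (hs_conv n eps he) as [N hN]. exists N. intros j hj. apply hN. lia.
  - intros eps he. destruct (cont_metric (psi G M gs n) (hs (S n)) eps (psi_cont G t TG M gs n) he) as [del [hd sd]].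
    destruct (hs_conv (S n) del hd) as [N hN]. exists N. intros j hj.
    specialize (hN j hj). rewrite d_sym in hN. specialize (sd _ hN). rewrite d_sym. exact sd.
Qed.

Theorem construct_metric : exists g h : nat -> G, (forall n, P (g n)) /\
  forall n, h n = gmul G (g n) (gpow G (h (S n)) (M n (g n))).
Proof. exists gs, hs. split. intro n. apply (gs_cnd n). intro n. apply hs_rel. Qed.
End Metric.

End P6.
Import P6.

Theorem lemma2p3 (G : group) (t : topology G) (H : group) (phi : G -> H) :
  topological_group G t ->
  (completely_metrizable t \/ (locally_compact t /\ hausdorff t)) ->
  aleph1_free H ->
  is_hom G H phi ->
  forall F : H -> Prop, is_subgroup H F -> fin_gen_subgroup H F ->
  exists U : G -> Prop, is_open t U /\ U (gone G) /\
    forall x, U x -> F (phi x) -> phi x = gone H.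
Proof.
  intros TG hcase Hal hphi F hFsub [l hl].
  apply NNPP. intro hno.
  set (Pg := fun g => F (phi g) /\ phi g <> gone H).
  assert (hP : forall U, is_open t U -> U (gone G) -> exists g, U g /\ Pg g).
  { intros U o h1. apply NNPP. intro hn. apply hno. exists U. split; auto. split; auto.
    intros x hx hF. apply NNPP. intro hne. apply hn. exists x. split; auto. split; auto. }
  set (Lw := fun g => epsilon (inhabits 0%nat) (fun k => exists w,
     word_over H (fun y => In y l) w /\ word_eval H w = phi g /\ length w = k)).
  set (M := fun (n : nat) g => (n * Lw g + 2)%nat).
  assert (hc : exists g h : nat -> G, (forall n, Pg (g n)) /\
    forall n, h n = gmul G (g n) (gpow G (h (S n)) (M n (g n)))).
  { destruct hcase as [[d [dm [di dc]]]|[hlc hh]].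
    - apply (construct_metric G t TG Pg hP M d dm di dc).
    - apply (construct_LC G t TG Pg hP M hlc hh). }
  destruct hc as [g [h [hg hh]]].
  apply (algebra_core H Hal l F hl (fun n => phi (g n)) (fun n => phi (h n))
           (fun n => M n (g n)) (fun n => Lw (g n))).
  - intro n. apply hg.
  - intro n. assert (ex : exists k, exists w, word_over H (fun y => In y l) w /\
        word_eval H w = phi (g n) /\ length w = k).
    { destruct (proj1 (hl _) (proj1 (hg n))) as [w [o E]]. eauto. }
    pose proof (epsilon_spec (inhabits 0%nat) _ ex) as [w [o [E L]]].
    exists w. split; auto. split; auto. unfold Lw. rewrite L. auto.
  - intro n. unfold M. lia.
  - intro n. simpl. rewrite (hh n), hphi, hom_pow; auto.
Qed.
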